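(* Let $A_1\le A_2$ and $B_1\le B_2$ be groups with $[A_2:A_1]<\infty$, $[B_2:B_1]<\infty$, $A_1\trianglelefteq B_1$, $A_2\trianglelefteq B_2$, and $A_1=B_1\cap A_2$. Let $\varphi:B_1\to B_2$ be a homomorphism with $\varphi(A_1)\subseteq A_2$. Let $\varphi'=\varphi|_{A_1}:A_1\to A_2$, and let $\bar\varphi:B_1A_2/A_2\to B_2/A_2$, $bA_2\mapsto\varphi(b)A_2$, be the induced map (using $B_1/A_1\cong B_1A_2/A_2$). Then: (1) if $R(\bar\varphi)=\infty$, then $R(\varphi)=\infty$; (2) if $R(\bar\varphi)<\infty$, $|\mathrm{Fix}(\bar\varphi)|<\infty$ and $R(\varphi')=\infty$, then $R(\varphi)=\infty$; (3) if $A_2\le Z(B_2)$, then $R(\varphi)\le R(\bar\varphi)R(\varphi')$ (with the product defined to be $\infty$ if either factor is $\infty$).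
   Context: For a group $K$, a finite-index subgroup $L\le K$ and a homomorphism $\phi:L\to K$, $R(\phi)\in\mathbb Z_{>0}\cup\{\infty\}$ is the number of classes of the relation $\alpha\sim_\phi\beta\iff\exists\gamma\in L:\ \alpha=\gamma\beta\phi(\gamma^{-1})$ on $K$. $\mathrm{Fix}(\bar\varphi)=\{x\in B_1A_2/A_2:\bar\varphi(x)=x\}$. *)

(* Defs.v *)
From HB Require Import structures.
From mathcomp Require Import all_boot.
From mathcomp Require Import monoid.
Set Implicit Arguments. Unset Strict Implicit. Unset Printing Implicit Defensive.

Local Open Scope group_scope.

Section Defs.
Variable G : groupType.

Definition is_subgroup (H : G -> Prop) : Prop :=
  [/\ H 1, (forall x y, H x -> H y -> H (x * y)) & (forall x, H x -> H x^-1)].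

Definition set_le (H K : G -> Prop) : Prop := forall x, H x -> K x.

Definition is_normal_in (N K : G -> Prop) : Prop :=
  set_le N K /\ forall k n, K k -> N n -> N (k^-1 * n * k).

Definition finite_index (H K : G -> Prop) : Prop :=
  exists l : seq G, (forall r, r \in l -> K r) /\
    forall x, K x -> exists2 r, r \in l & H (r^-1 * x).

Definition hom_on (H : G -> Prop) (phi : G -> G) : Prop :=
  forall x y, H x -> H y -> phi (x * y) = phi x * phi y.

Definition same_coset (N : G -> Prop) (a b : G) : Prop := N (a^-1 * b).

Definition reid_rel (L : G -> Prop) (phi : G -> G) (a b : G) : Prop :=
  exists2 g, L g & a = g * b * phi g^-1.

(* The Reidemeister relation of the induced map
   bar phi : B1 A2 / A2 -> B2 / A2,  b A2 |-> phi(b) A2,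
   lifted to representatives in B2: a A2 ~ b A2 iff there is gamma A2 in
   B1 A2 / A2 (w.l.o.g. gamma in B1) with a A2 = gamma A2 * b A2 * bar phi(gamma A2)^-1. *)
Definition bar_reid_rel (B1 A2 : G -> Prop) (phi : G -> G) (a b : G) : Prop :=
  exists2 g, B1 g & same_coset A2 a (g * b * (phi g)^-1).

Definition nclasses (S : G -> Prop) (E : G -> G -> Prop) (n : nat) : Prop :=
  exists l : seq G, [/\ size l = n,
    (forall x, x \in l -> S x),
    (forall i j, i < n -> j < n -> E (nth 1 l i) (nth 1 l j) -> i = j) &
    (forall x, S x -> exists2 y, y \in l & E x y)].

Definition infinite_classes (S : G -> Prop) (E : G -> G -> Prop) : Prop :=
  ~ exists n, nclasses S E n.

(* Fix(bar phi) as a set of representatives in B2: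
   b A2 with b in B1 and phi(b) A2 = b A2. *)
Definition fix_bar (B1 A2 : G -> Prop) (phi : G -> G) (b : G) : Prop :=
  B1 b /\ same_coset A2 (phi b) b.

Definition central (x : G) : Prop := forall y, x * y = y * x.

End Defs.

(* Main.v *)
Require Import Defs.
From HB Require Import structures.
From mathcomp Require Import all_boot.
From mathcomp Require Import monoid.
From Stdlib Require Import Classical.
Local Open Scope group_scope.

Lemma cover_nclasses (G : groupType) (E : G -> G -> Prop)
  (Esym : forall x y, E x y -> E y x)
  (Etr : forall x y z, E x y -> E y z -> E x z) (l : seq G) :
  forall S : G -> Prop, (forall x, x \in l -> S x) ->
  (forall x, S x -> exists2 y, y \in l & E x y) ->
  exists2 n, nclasses S E n & (n <= size l)%N.
Proof.
elim: l => [|c l IH] S lS cov.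
  exists 0%N => //; exists [::]; split=> // x /cov [y] //.
case: (classic (exists2 y, y \in l & E c y)) => [[y yl Ecy]|nrel].
  have cov' : forall x, S x -> exists2 y, y \in l & E x y.
    move=> x /cov [z]; rewrite in_cons => /orP [/eqP -> Exc|zl Exz].
      by exists y => //; apply: Etr Exc Ecy.
    by exists z.
  have [n nc le] := IH S (fun x xl => lS x (mem_behead (s:=c :: l) xl)) cov'.
  by exists n => //=; apply: leqW.
pose S' := fun x => S x /\ ~ E x c.
have lS' : forall x, x \in l -> S' x.
  move=> x xl; split; first by apply: lS; rewrite in_cons xl orbT.
  by move=> Exc; apply: nrel; exists x => //; apply: Esym.
have cov' : forall x, S' x -> exists2 y, y \in l & E x y.
  move=> x [Sx nExc]; have [y] := cov x Sx.
  rewrite in_cons => /orP [/eqP -> //|yl Exy]; by exists y.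
have [n [r [sr rS rP rC]] le] := IH S' lS' cov'.
exists n.+1; last by [].
exists (c :: r); split => //.
+ by rewrite /= sr.
+ move=> x; rewrite in_cons => /orP [/eqP ->|/rS [] //].
  by apply: lS; rewrite mem_head.
+ move=> [|i] [|j] //= ilt jlt.
  * move=> Ecj; have := rS (nth 1 r j); rewrite mem_nth ?sr //.
    by move=> /(_ isT) [_ []]; apply: Esym.
  * move=> Eic; have := rS (nth 1 r i); rewrite mem_nth ?sr //.
    by move=> /(_ isT) [_ []].
  * by move=> /rP -> //.
+ move=> x Sx; have [Exc|nExc] := classic (E x c).
    by exists c => //; rewrite mem_head.
  have [y yr Exy] := rC x (conj Sx nExc).
  by exists y => //; rewrite in_cons yr orbT.
Qed.

Section Alg.
Variable G : groupType.
Implicit Types x y z g h a b c p q u f ac pf pu : G.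
Lemma alg_sym x y g h : x = g * y * h^-1 -> y = g^-1 * x * h.
Proof. by move=> ->; rewrite !mulgA mulVg mul1g mulgVK. Qed.
Lemma alg_tr x y z g h pg ph : x = g * y * pg^-1 -> y = h * z * ph^-1 ->
  x = (g * h) * z * (pg * ph)^-1.
Proof. by move=> -> ->; rewrite invgM !mulgA. Qed.
Lemma alg_bsym a b g p : p^-1 * (a^-1 * (g*b*p^-1))^-1 * p = b^-1 * (g^-1 * a * (p^-1)^-1).
Proof. by rewrite !invgM !invgK !mulgA mulVg mul1g. Qed.
Lemma alg_btr a b c g h p q : a^-1 * (g*b*p^-1) * (p * (b^-1 * (h*c*q^-1)) * p^-1) = a^-1 * (g*h*c*(p*q)^-1).
Proof. by rewrite !invgM !mulgA mulgVK mulgK. Qed.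
Lemma alg3 x g c p u h a q : x = g*c*p^-1*u -> u = h*a*q^-1 ->
  p^-1 * u = u * p^-1 -> c*h = h*c -> x = g*h*(c*a)*(q^-1*p^-1).
Proof.
move=> Ex Eu Cu Cch; rewrite Ex -(mulgA _ p^-1 u) Cu mulgA Eu !mulgA.
by rewrite -(mulgA g c h) Cch !mulgA.
Qed.
Lemma alg4 f ac p : f*ac*p^-1 = (f*ac*f^-1) * (f*(p^-1*f)*f^-1).
Proof. by rewrite !mulgA mulgVK mulgK. Qed.
Lemma alg5 a h ac p : a = h*ac*p^-1 -> h*p^-1 = a*(p*ac^-1*p^-1).
Proof. by move=> ->; rewrite !mulgA mulgVK mulgK. Qed.
Lemma alg6 a f u ac pf pu : a = (f*u)*ac*(pf*pu)^-1 ->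
  a = (f*u*f^-1) * (f*ac*pf^-1) * (pf*pu*pf^-1)^-1.
Proof. by move=> ->; rewrite !invgM !invgK !mulgA mulgVK mulgVK. Qed.
End Alg.
Arguments alg_sym {G}. Arguments alg_tr {G}. Arguments alg_bsym {G}. Arguments alg_btr {G}. Arguments alg3 {G}. Arguments alg4 {G}. Arguments alg5 {G}. Arguments alg6 {G}.

Theorem mainTheorem7 (G : groupType) (B1 A1 A2 : G -> Prop) (phi : G -> G)
  (sgB1 : is_subgroup B1) (sgA1 : is_subgroup A1) (sgA2 : is_subgroup A2)
  (A1subA2 : set_le A1 A2)
  (fiA : finite_index A1 A2) (fiB : finite_index B1 (fun _ => True))
  (nA1 : is_normal_in A1 B1) (nA2 : is_normal_in A2 (fun _ => True))
  (A1E : forall x, A1 x <-> (B1 x /\ A2 x))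
  (homphi : hom_on B1 phi)
  (phiA1 : forall x, A1 x -> A2 (phi x)) :
  (infinite_classes (fun _ => True) (bar_reid_rel B1 A2 phi) ->
     infinite_classes (fun _ => True) (reid_rel B1 phi))
  /\
  ((exists n, nclasses (fun _ => True) (bar_reid_rel B1 A2 phi) n) ->
   (exists m, nclasses (fix_bar B1 A2 phi) (same_coset A2) m) ->
   infinite_classes A2 (reid_rel A1 phi) ->
     infinite_classes (fun _ => True) (reid_rel B1 phi))
  /\
  ((forall a, A2 a -> central a) ->
   forall m k, nclasses (fun _ => True) (bar_reid_rel B1 A2 phi) m ->
     nclasses A2 (reid_rel A1 phi) k ->
     exists2 n, nclasses (fun _ => True) (reid_rel B1 phi) n & (n <= m * k)%N).
Proof.
case: sgB1 => B1_1 B1M B1V; case: sgA1 => A1_1 A1M A1V.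
case: sgA2 => A2_1 A2M A2V; case: nA2 => _ nA2c; case: nA1 => _ nA1c.
have A2c : forall k n, A2 n -> A2 (k * n * k^-1).
  by move=> k n An; have := nA2c k^-1 n I An; rewrite invgK.
have A1B1 : forall x, A1 x -> B1 x by move=> x /A1E [].
have phi1 : phi 1 = 1.
  have := homphi _ _ B1_1 B1_1; rewrite mul1g => E.
  by apply: (mulgI (phi 1)); rewrite mulg1 -E.
have phiV : forall g, B1 g -> phi g^-1 = (phi g)^-1.
  move=> g Bg; have := homphi _ _ Bg (B1V _ Bg); rewrite mulgV phi1 => E.
  by apply/esym/mulg1_eq; rewrite -E.
have reidE : forall L, set_le L B1 -> forall a b,
    reid_rel L phi a b <-> exists2 g, L g & a = g * b * (phi g)^-1.
  move=> L LB a b; split=> [[g Lg E]|[g Lg E]]; exists g => //.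
    by rewrite -phiV //; apply: LB.
  by rewrite phiV //; apply: LB.
have reid_sym : forall L, is_subgroup L -> set_le L B1 ->
    forall a b, reid_rel L phi a b -> reid_rel L phi b a.
  move=> L [L1 LM LV] LB a b /(reidE L LB) [g Lg E].
  apply/(reidE L LB); exists g^-1; first exact: LV.
  rewrite phiV ?invgK; first exact: alg_sym.
  exact: LB.
have reid_tr : forall L, is_subgroup L -> set_le L B1 ->
    forall a b c, reid_rel L phi a b -> reid_rel L phi b c -> reid_rel L phi a c.
  move=> L [L1 LM LV] LB a b c /(reidE L LB) [g Lg E] /(reidE L LB) [h Lh F].
  apply/(reidE L LB); exists (g * h); first exact: LM.
  rewrite (homphi g h); first exact: alg_tr E F.
  exact: LB. exact: LB.
have sgB1 : is_subgroup B1 by [].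
have sgA1 : is_subgroup A1 by [].
have symB := reid_sym B1 sgB1 (fun x h => h).
have trB := reid_tr B1 sgB1 (fun x h => h).
have symA := reid_sym A1 sgA1 A1B1.
have trA := reid_tr A1 sgA1 A1B1.
have bar_sym : forall a b, bar_reid_rel B1 A2 phi a b -> bar_reid_rel B1 A2 phi b a.
  move=> a b [g Bg An]; exists g^-1; first exact: B1V.
  rewrite /same_coset phiV // -alg_bsym; apply: nA2c => //; exact: A2V.
have bar_tr : forall a b c, bar_reid_rel B1 A2 phi a b ->
    bar_reid_rel B1 A2 phi b c -> bar_reid_rel B1 A2 phi a c.
  move=> a b c [g Bg An1] [h Bh An2]; exists (g * h); first exact: B1M.
  rewrite /same_coset (homphi g h) // -(alg_btr a b); apply: A2M => //; exact: A2c.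
split; [|split].
- move=> Hinf [n [l [_ lS _ lC]]]; apply: Hinf.
  have cov : forall x, True -> exists2 y, y \in l & bar_reid_rel B1 A2 phi x y.
    move=> x _; have [y yl /(reidE B1 (fun x h => h)) [g Bg E]] := lC x I.
    exists y => //; exists g => //; rewrite /same_coset -E mulVg; exact: A2_1.
  have [n' nc _] := @cover_nclasses G _ bar_sym bar_tr l (fun _ => True) (fun _ _ => I) cov.
  by exists n'.
- move=> _ [mf [fl [_ flS _ flC]]] Hinf [n [l [_ _ _ lC]]]; apply: Hinf.
  have claim : forall l0 : seq G, exists L : seq G, (forall y, y \in L -> A2 y) /\
      (forall a, A2 a -> (exists2 c, c \in l0 & reid_rel B1 phi a c) ->
        exists2 y, y \in L & reid_rel A1 phi a y).
    elim=> [|c l0 [L [LA HL]]].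
      by exists [::]; split => // a _ [c].
    case: (classic (exists2 ac, A2 ac & reid_rel B1 phi ac c)) => [[ac Aac Rac]|no].
      exists ([seq f * ac * (phi f)^-1 | f <- fl] ++ L); split.
        move=> y; rewrite mem_cat => /orP [/mapP [f fin ->]|/LA //].
        have [Bf Af] := flS f fin.
        rewrite alg4; apply: A2M; first exact: A2c.
        exact: A2c.
      move=> a Aa [c' c'in Rac']; move: c'in; rewrite in_cons => /orP [/eqP Ec|c'l].
        subst c'.
        have /(reidE B1 (fun x h => h)) [h Bh Eh] := trB _ _ _ Rac' (symB _ _ Rac).
        have Hfix1 : A2 (h * (phi h)^-1).
          rewrite (alg5 _ _ _ _ Eh); apply: A2M => //; apply: A2c; exact: A2V.
        have Hfix : A2 ((phi h)^-1 * h).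
          have := nA2c h _ I Hfix1; by rewrite !mulgA mulVg mul1g.
        have [f fin Hc] := flC h (conj Bh Hfix).
        have [Bf _] := flS f fin.
        pose u := f^-1 * h.
        have Bu : B1 u by apply: B1M => //; apply: B1V.
        have Au : A1 u.
          apply/A1E; split => //; have := A2V _ Hc; by rewrite invgM invgK.
        have hE : h = f * u by rewrite /u mulVKg.
        exists (f * ac * (phi f)^-1).
          by rewrite mem_cat; apply/orP; left; apply/mapP; exists f.
        apply/(reidE A1 A1B1); exists (f * u * f^-1).
          by have := nA1c f^-1 u (B1V _ Bf) Au; rewrite invgK.
        rewrite (homphi (f * u) f^-1); last exact: B1V. 2: exact: B1M.
        rewrite (homphi f u) // phiV //; apply: alg6.
        by rewrite -(homphi f u) // -hE.
      have [y yL Ry] := HL a Aa (ex_intro2 _ _ c' c'l Rac').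
      by exists y => //; rewrite mem_cat yL orbT.
    exists L; split => // a Aa [c' c'in Rac']; move: c'in; rewrite in_cons => /orP [/eqP Ec|c'l].
      by subst c'; case: no; exists a.
    exact: HL a Aa (ex_intro2 _ _ c' c'l Rac').
  have [L [LA HL]] := claim l.
  have cov : forall a, A2 a -> exists2 y, y \in L & reid_rel A1 phi a y.
    by move=> a Aa; apply: HL => //; apply: lC.
  have [n' nc _] := @cover_nclasses G _ symA trA L A2 LA cov.
  by exists n'.
- move=> cen m k [l [sl _ _ lC]] [t [st tS _ tC]].
  pose L := [seq c * a | c <- l, a <- t].
  have cov : forall x, True -> exists2 y, y \in L & reid_rel B1 phi x y.
    move=> x _; have [c cl [g Bg Hn]] := lC x I.
    pose u := (x^-1 * (g * c * (phi g)^-1))^-1.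
    have Au : A2 u by apply: A2V.
    have [a at0 /(reidE A1 A1B1) [h Ah Eu]] := tC u Au.
    exists (c * a); first exact: allpairs_f.
    apply/(reidE B1 (fun x h => h)); exists (g * h); first by apply: B1M => //; apply: A1B1.
    rewrite (homphi g h) //; last exact: A1B1.
    rewrite invgM; apply: (alg3 _ _ _ _ _ _ _ _ _ Eu).
    - by rewrite /u invgM invgK mulVKg.
    - by rewrite (cen u Au).
    - by rewrite (cen h (A1subA2 _ Ah)).
  have [n nc le] := @cover_nclasses G _ symB trB L (fun _ => True) (fun _ _ => I) cov.
  exists n => //; apply: (leq_trans le).
  by rewrite size_allpairs sl st.
Qed.
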